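(* $\lim_{L\to\infty}Y_L(0)=-1/2$, where $Y_L(t)=\dfrac{\partial y_L(t)/\partial L}{y_L(t)}$.
   Context: For $\alpha\in(0,1/\sqrt2)$ let $L_\alpha=\pi/\mathrm{AGM}(\alpha,\tfrac12\sqrt{1+2\alpha^2})$; $\alpha\mapsto L_\alpha$ is a decreasing bijection from $(0,1/\sqrt2)$ onto $(\pi\sqrt2,\infty)$. For $L>\pi\sqrt2$ let $\alpha$ satisfy $L_\alpha=L$ and let $x_0>y_0>0$ satisfy $x_0^2+y_0^2=1$, $x_0y_0=\alpha^2$. Let $(x_L,y_L,z_L)(t)$ solve $x'=-xz$, $y'=yz$, $z'=x^2-y^2$ ($'=d/dt$) with initial value $(x_0,y_0,0)$. *)

(* Defs.v *)
From Stdlib Require Import Reals.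
From Coquelicot Require Import Coquelicot.
Open Scope R_scope.

Fixpoint agm_seq (a b : R) (n : nat) : R * R :=
  match n with
  | O => (a, b)
  | S n' => let p := agm_seq a b n' in ((fst p + snd p) / 2, sqrt (fst p * snd p))
  end.

Definition AGM (a b : R) : R := real (Lim_seq (fun n => fst (agm_seq a b n))).

Definition L_alpha (alpha : R) : R := PI / AGM alpha (sqrt (1 + 2 * alpha ^ 2) / 2).

(* Main.v *)
Require Import Defs.
From Stdlib Require Import Reals Lra Lia Psatz ClassicalEpsilon Ranalysis5 FunctionalExtensionality.
From Coquelicot Require Import Coquelicot.
Open Scope R_scope.

Definition Dq (a b t : R) := a^2 * cos t ^ 2 + b^2 * sin t ^ 2.
Definition fI (a b t : R) := / sqrt (Dq a b t).
Definition II (a b : R) : R := RInt (fI a b) 0 (PI/2).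

Lemma Dq_lb a b t m : 0 <= m -> m <= Rabs a -> m <= Rabs b -> m^2 <= Dq a b t.
Proof.
  intros Hm Ha Hb. unfold Dq.
  assert (m^2 <= a^2). { rewrite <- (pow2_abs a). nra. }
  assert (m^2 <= b^2). { rewrite <- (pow2_abs b). nra. }
  pose proof (sin2_cos2 t). unfold Rsqr in *.
  assert (0 <= cos t ^2) by nra. assert (0 <= sin t ^2) by nra. nra.
Qed.

Lemma Dq_ub a b t m : Rabs a <= m -> Rabs b <= m -> Dq a b t <= m^2.
Proof.
  intros Ha Hb. unfold Dq.
  assert (a^2 <= m^2). { rewrite <- (pow2_abs a). pose proof (Rabs_pos a). nra. }
  assert (b^2 <= m^2). { rewrite <- (pow2_abs b). pose proof (Rabs_pos b). nra. }
  pose proof (sin2_cos2 t). unfold Rsqr in *.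
  assert (0 <= cos t ^2) by nra. assert (0 <= sin t ^2) by nra. nra.
Qed.

Lemma Dq_pos a b t : 0 < a -> 0 < b -> 0 < Dq a b t.
Proof.
  intros Ha Hb. apply Rlt_le_trans with ((Rmin a b)^2).
  - apply pow_lt. apply Rmin_pos; lra.
  - apply Dq_lb. apply Rlt_le, Rmin_pos; lra.
    rewrite Rabs_pos_eq by lra. apply Rmin_l.
    rewrite Rabs_pos_eq by lra. apply Rmin_r.
Qed.

Lemma fI_cont a b t : 0 < a -> 0 < b -> continuous (fI a b) t.
Proof.
  intros Ha Hb. apply (ex_derive_continuous (V:=R_NormedModule) (fI a b) t). unfold fI, Dq.
  pose proof (Dq_pos a b t Ha Hb). unfold Dq in H.
  auto_derive. split; [lra|]. split; [|auto].
  apply Rgt_not_eq. apply sqrt_lt_R0. lra.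
Qed.

Lemma fI_ex a b x y : 0 < a -> 0 < b -> ex_RInt (fI a b) x y.
Proof. intros. apply (@ex_RInt_continuous R_CompleteNormedModule). intros. apply fI_cont; auto. Qed.

Lemma fI_bounds a b t m M : 0 < m -> m <= a -> m <= b -> a <= M -> b <= M ->
  / M <= fI a b t <= / m.
Proof.
  intros. unfold fI.
  assert (m^2 <= Dq a b t) by (apply Dq_lb; rewrite ?Rabs_pos_eq; lra).
  assert (Dq a b t <= M^2) by (apply Dq_ub; rewrite ?Rabs_pos_eq; lra).
  assert (m <= sqrt (Dq a b t)). { rewrite <- (sqrt_pow2 m) by lra. apply sqrt_le_1_alt. lra. }
  assert (sqrt (Dq a b t) <= M). { rewrite <- (sqrt_pow2 M) by lra. apply sqrt_le_1_alt. lra. }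
  split; apply Rinv_le_contravar; lra.
Qed.

Lemma RInt_const_le (f : R -> R) a b c : a <= b -> ex_RInt f a b ->
  (forall x, a < x < b -> f x <= c) -> RInt f a b <= c * (b - a).
Proof.
  intros Hab Hf H. replace (c * (b-a)) with (RInt (fun _ => c) a b).
  apply RInt_le; auto. apply ex_RInt_const.
  rewrite RInt_const. unfold scal; simpl; unfold mult; simpl. ring.
Qed.

Lemma RInt_const_ge (f : R -> R) a b c : a <= b -> ex_RInt f a b ->
  (forall x, a < x < b -> c <= f x) -> c * (b - a) <= RInt f a b.
Proof.
  intros Hab Hf H. replace (c * (b-a)) with (RInt (fun _ => c) a b).
  apply RInt_le; auto. apply ex_RInt_const.
  rewrite RInt_const. unfold scal; simpl; unfold mult; simpl. ring.
Qed.

Lemma II_bounds a b m M : 0 < m -> m <= a -> m <= b -> a <= M -> b <= M ->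
  / M * (PI/2) <= II a b <= / m * (PI/2).
Proof.
  intros. unfold II. pose proof PI_RGT_0.
  split.
  - replace (PI/2) with (PI/2 - 0) at 1 by ring. apply RInt_const_ge. lra.
    apply fI_ex; lra. intros. apply (fI_bounds a b x m M); auto.
  - replace (PI/2) with (PI/2 - 0) at 2 by ring. apply RInt_const_le. lra.
    apply fI_ex; lra. intros. apply (fI_bounds a b x m M); auto.
Qed.

Lemma agm_step_bound x y : 0 < x -> 0 < y ->
  Rabs ((x + y)/2 - sqrt (x*y)) <= Rabs (x - y) / 2.
Proof.
  intros Hx Hy.
  pose proof (sqrt_lt_R0 x Hx). pose proof (sqrt_lt_R0 y Hy).
  pose proof (sqrt_sqrt x (Rlt_le _ _ Hx)). pose proof (sqrt_sqrt y (Rlt_le _ _ Hy)).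
  rewrite sqrt_mult by lra.
  set (u := sqrt x) in *. set (v := sqrt y) in *.
  rewrite <- H1, <- H2.
  replace ((u*u + v*v)/2 - u*v) with ((u-v)^2/2) by field.
  rewrite Rabs_pos_eq by (pose proof (pow2_ge_0 (u-v)); lra).
  replace (u*u - v*v) with ((u-v)*(u+v)) by ring.
  rewrite Rabs_mult. rewrite (Rabs_pos_eq (u+v)) by lra.
  destruct (Rle_dec 0 (u-v)).
  - rewrite Rabs_pos_eq by lra. nra.
  - rewrite Rabs_left by lra. nra.
Qed.

Section AGMlim.
Hypothesis Hgauss : forall a b, 0 < a -> 0 < b -> II a b = II ((a+b)/2) (sqrt (a*b)).

Lemma agm_props a b : 0 < a -> 0 < b -> forall n,
  0 < fst (agm_seq a b n) /\ 0 < snd (agm_seq a b n) /\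
  II (fst (agm_seq a b n)) (snd (agm_seq a b n)) = II a b /\
  Rabs (fst (agm_seq a b n) - snd (agm_seq a b n)) <= Rabs (a - b) * (/2)^n.
Proof.
  intros Ha Hb n. induction n as [|n IH].
  - simpl. repeat split; try lra.
  - simpl. destruct (agm_seq a b n) as [x y]. simpl in *.
    destruct IH as [Hx [Hy [HI Hd]]].
    split; [lra|]. split; [apply sqrt_lt_R0; nra|]. split.
    + rewrite <- Hgauss; auto.
    + eapply Rle_trans. apply agm_step_bound; auto. lra.
Qed.

Lemma AGM_II a b : 0 < a -> 0 < b -> AGM a b = PI / (2 * II a b).
Proof.
  intros Ha Hb. pose proof PI_RGT_0 as HPI.
  assert (HIpos : 0 < II a b).
  { pose proof (II_bounds a b (Rmin a b) (Rmax a b)).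
    assert (0 < Rmin a b) by (apply Rmin_pos; lra).
    destruct H as [H1 _]; auto using Rmin_l, Rmin_r, Rmax_l, Rmax_r.
    eapply Rlt_le_trans; [|exact H1].
    apply Rmult_lt_0_compat. apply Rinv_0_lt_compat. eapply Rlt_le_trans. exact H0.
    eapply Rle_trans. apply Rmin_l. apply Rmax_l. lra. }
  set (c := PI / (2 * II a b)).
  assert (Hlim : is_lim_seq (fun n => fst (agm_seq a b n)) c).
  { apply is_lim_seq_le_le with (u := fun n => c - Rabs (a-b) * (/2)^n)
                                (w := fun n => c + Rabs (a-b) * (/2)^n).
    - intro n. destruct (agm_props a b Ha Hb n) as [Hx [Hy [HI Hd]]].
      set (x := fst (agm_seq a b n)) in *. set (y := snd (agm_seq a b n)) in *.
      pose proof (II_bounds x y (Rmin x y) (Rmax x y)) as HB.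
      assert (0 < Rmin x y) by (apply Rmin_pos; lra).
      assert (0 < Rmax x y) by (eapply Rlt_le_trans; [exact Hx| apply Rmax_l]).
      destruct HB as [HB1 HB2]; auto using Rmin_l, Rmin_r, Rmax_l, Rmax_r.
      rewrite HI in HB1, HB2.
      assert (Hc : Rmin x y <= c <= Rmax x y).
      { unfold c. split.
        - apply Rmult_le_reg_r with (2 * II a b). lra.
          unfold Rdiv. rewrite Rmult_assoc, Rinv_l, Rmult_1_r by lra.
          apply Rmult_le_reg_l with (/ Rmin x y). apply Rinv_0_lt_compat; lra.
          replace (/ Rmin x y * (Rmin x y * (2 * II a b))) with (2 * II a b) by (field; lra).
          lra.
        - apply Rmult_le_reg_r with (2 * II a b). lra.
          unfold Rdiv. rewrite Rmult_assoc, Rinv_l, Rmult_1_r by lra.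
          apply Rmult_le_reg_l with (/ Rmax x y). apply Rinv_0_lt_compat; lra.
          replace (/ Rmax x y * (Rmax x y * (2 * II a b))) with (2 * II a b) by (field; lra).
          lra. }
      assert (Rabs (x - c) <= Rabs (x - y)).
      { unfold Rmin, Rmax in Hc. destruct (Rle_dec x y).
        - rewrite (Rabs_left1 (x-c)) by lra. rewrite (Rabs_left1 (x-y)) by lra. lra.
        - rewrite (Rabs_pos_eq (x-c)) by lra. rewrite (Rabs_pos_eq (x-y)) by lra. lra. }
      split; apply Rabs_le_between'; lra.
    - replace (Finite c) with (Finite (c - Rabs (a-b) * 0)) by (f_equal; ring).
      apply is_lim_seq_minus'. apply is_lim_seq_const.
      apply (is_lim_seq_scal_l _ _ 0). apply is_lim_seq_geom. rewrite Rabs_pos_eq; lra.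
    - replace (Finite c) with (Finite (c + Rabs (a-b) * 0)) by (f_equal; ring).
      apply is_lim_seq_plus'. apply is_lim_seq_const.
      apply (is_lim_seq_scal_l _ _ 0). apply is_lim_seq_geom. rewrite Rabs_pos_eq; lra. }
  unfold AGM. rewrite (is_lim_seq_unique _ _ Hlim). reflexivity.
Qed.
End AGMlim.

Section Gauss.
Variables a b : R.
Hypothesis Ha : 0 < a.
Hypothesis Hb : 0 < b.
Let g := sqrt (a * b).
Let m := (a + b) / 2.

Lemma g_pos : 0 < g.
Proof. unfold g. apply sqrt_lt_R0. nra. Qed.
Lemma g_sq : g * g = a * b.
Proof. unfold g. apply sqrt_sqrt. nra. Qed.

Definition UU (t : R) := (b * sin t ^ 2 - a * cos t ^ 2) / (2 * g * sin t * cos t).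
Definition PP (t : R) := b * sin t ^ 2 + a * cos t ^ 2.
Definition phi (t : R) := atan (UU t).
Definition dphi (t : R) := 2 * g / PP t.

Lemma PP_pos t : 0 < PP t.
Proof.
  unfold PP. pose proof (sin2_cos2 t). unfold Rsqr in H.
  assert (0 <= sin t ^ 2) by nra. assert (0 <= cos t ^ 2) by nra.
  destruct (Rle_lt_dec (sin t ^ 2) 0).
  - assert (cos t ^ 2 = 1) by nra. nra.
  - nra.
Qed.

Lemma sc_pos t : 0 < t < PI/2 -> 0 < sin t /\ 0 < cos t.
Proof.
  intros. split. apply sin_gt_0; lra. apply cos_gt_0; lra.
Qed.

Lemma UU_derive t : 0 < t < PI/2 ->
  is_derive UU t (PP t / (2 * g * sin t ^ 2 * cos t ^ 2)).
Proof.
  intros Ht. destruct (sc_pos t Ht) as [Hs Hc]. pose proof g_pos as Hg.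
  unfold UU. auto_derive.
  - repeat split; apply Rgt_not_eq; repeat apply Rmult_lt_0_compat; lra.
  - unfold PP. pose proof (sin2_cos2 t) as H1. unfold Rsqr in H1.
    replace (b * sin t ^ 2 + a * cos t ^ 2) with
      ((b * sin t ^ 2 + a * cos t ^ 2) * (sin t * sin t + cos t * cos t)) by (rewrite H1; ring).
    field. repeat split; apply Rgt_not_eq; lra.
Qed.

Lemma one_UU2 t : 0 < t < PI/2 ->
  1 + UU t ^ 2 = PP t ^ 2 / (2 * g * sin t * cos t) ^ 2.
Proof.
  intros Ht. destruct (sc_pos t Ht) as [Hs Hc]. pose proof g_pos as Hg. pose proof g_sq as Hg2.
  unfold UU, PP. field_simplify. 2: repeat split; apply Rgt_not_eq; lra.
  2: repeat split; apply Rgt_not_eq; lra.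
  replace (g ^ 2) with (a * b) by (rewrite <- Hg2; ring).
  field. repeat split; apply Rgt_not_eq; lra.
Qed.

Lemma phi_derive t : 0 < t < PI/2 -> is_derive phi t (dphi t).
Proof.
  intros Ht. destruct (sc_pos t Ht) as [Hs Hc]. pose proof g_pos as Hg.
  pose proof (PP_pos t) as HP.
  pose proof (is_derive_comp atan UU t _ _ (is_derive_atan (UU t)) (UU_derive t Ht)) as H.
  unfold phi. replace (dphi t) with (scal (PP t / (2 * g * sin t ^ 2 * cos t ^ 2)) (/ (1 + (UU t)²))).
  exact H.
  unfold scal; simpl; unfold mult; simpl. unfold Rsqr. replace (UU t * UU t) with (UU t ^ 2) by ring.
  rewrite one_UU2 by auto. unfold dphi. field. repeat split; apply Rgt_not_eq; lra.
Qed.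

Lemma sq_div_sqrt x w : 0 < w -> (x / sqrt w) ^ 2 = x ^ 2 / w.
Proof.
  intros. unfold Rdiv. rewrite Rpow_mult_distr, pow_inv, pow2_sqrt by lra. reflexivity.
Qed.

Lemma key_id t : (a+b)^2 * sin t ^2 * cos t ^2 + (b * sin t ^ 2 - a * cos t ^ 2)^2
   = Dq a b t.
Proof.
  unfold Dq. pose proof (sin2_cos2 t) as H1. unfold Rsqr in H1.
  transitivity ((a^2 * cos t ^2 + b^2 * sin t ^2) * (sin t * sin t + cos t * cos t)).
  ring. rewrite H1. ring.
Qed.

Lemma Dq_phi t : 0 < t < PI/2 -> Dq m g (phi t) = g ^ 2 * Dq a b t / PP t ^ 2.
Proof.
  intros Ht. destruct (sc_pos t Ht) as [Hs Hc]. pose proof g_pos as Hg.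
  pose proof (PP_pos t) as HP.
  assert (Hw : 0 < 1 + UU t ^ 2) by (pose proof (pow2_ge_0 (UU t)); lra).
  unfold Dq at 1, phi. rewrite cos_atan, sin_atan. unfold Rsqr.
  replace (UU t * UU t) with (UU t ^ 2) by ring.
  rewrite !sq_div_sqrt by auto.
  replace ((a+b)/2) with m by reflexivity.
  transitivity ((m^2 + g^2 * UU t ^2) / (1 + UU t ^ 2)). field. lra.
  rewrite one_UU2 by auto. rewrite <- key_id. unfold UU, m.
  field. repeat split; apply Rgt_not_eq; lra.
Qed.

Lemma dphi_fI t : 0 < t < PI/2 -> dphi t * fI m g (phi t) = 2 * fI a b t.
Proof.
  intros Ht. pose proof g_pos as Hg. pose proof (PP_pos t) as HP.
  pose proof (Dq_pos a b t Ha Hb) as HQ.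
  unfold fI. rewrite Dq_phi by auto.
  assert (E : sqrt (g ^ 2 * Dq a b t / PP t ^ 2) = g * sqrt (Dq a b t) / PP t).
  { apply sqrt_lem_1. apply Rlt_le. apply Rdiv_lt_0_compat. apply Rmult_lt_0_compat. apply pow_lt; lra. lra. apply pow_lt; lra.
    apply Rlt_le. apply Rdiv_lt_0_compat; auto. apply Rmult_lt_0_compat; auto. apply sqrt_lt_R0; auto.
    pose proof (sqrt_sqrt (Dq a b t) (Rlt_le _ _ HQ)).
    transitivity (g^2 * (sqrt (Dq a b t) * sqrt (Dq a b t)) / PP t ^2). field. lra.
    rewrite H. reflexivity. }
  rewrite E. unfold dphi. pose proof (sqrt_lt_R0 _ HQ).
  field. repeat split; apply Rgt_not_eq; lra.
Qed.

Lemma dphi_cont t : continuous dphi t.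
Proof.
  apply (ex_derive_continuous (V:=R_NormedModule) dphi t).
  pose proof (PP_pos t) as HP. unfold dphi, PP in *. auto_derive. lra.
Qed.

Lemma m_pos : 0 < m.
Proof. unfold m; lra. Qed.

Lemma sub_int t1 t2 : 0 < t1 -> t1 <= t2 -> t2 < PI/2 ->
  RInt (fI m g) (phi t1) (phi t2) = 2 * RInt (fI a b) t1 t2.
Proof.
  intros H1 H2 H3. pose proof g_pos. pose proof m_pos.
  assert (HC := is_RInt_comp (fI m g) phi dphi t1 t2).
  rewrite Rmin_left, Rmax_right in HC by lra.
  assert (HC' : is_RInt (fun y => scal (dphi y) (fI m g (phi y))) t1 t2
                  (RInt (fI m g) (phi t1) (phi t2))).
  { apply HC. intros. apply fI_cont; auto.
    intros. split. apply phi_derive; lra. apply dphi_cont. }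
  apply (is_RInt_unique (V:=R_CompleteNormedModule)) in HC'. rewrite <- HC'.
  replace (2 * RInt (fI a b) t1 t2) with (scal 2 (RInt (fI a b) t1 t2)) by reflexivity.
  rewrite <- (RInt_scal (V:=R_CompleteNormedModule) (fI a b) t1 t2 2) by (apply fI_ex; auto).
  apply RInt_ext. rewrite Rmin_left, Rmax_right by lra. intros x Hx.
  unfold scal; simpl; unfold mult; simpl. apply dphi_fI. lra.
Qed.

Lemma UU_atan T : 0 < T -> UU (atan T) = (b * T ^ 2 - a) / (2 * g * T).
Proof.
  intros HT. pose proof g_pos. unfold UU. rewrite cos_atan, sin_atan.
  assert (Hw : 0 < 1 + T²) by (unfold Rsqr; nra).
  pose proof (sqrt_lt_R0 _ Hw). pose proof (sqrt_sqrt _ (Rlt_le _ _ Hw)).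
  rewrite !sq_div_sqrt by auto.
  field_simplify; try (repeat split; apply Rgt_not_eq; lra).
  rewrite pow2_sqrt by lra.
  field. unfold Rsqr. assert (0 < T*(T*T)) by (apply Rmult_lt_0_compat; nra). repeat split; try lra; try nra.
Qed.


Lemma atan_le x y : x <= y -> atan x <= atan y.
Proof. intros [H|H]. left; apply atan_increasing; auto. subst; lra. Qed.

Lemma pick_t eps : 0 < eps < PI/4 -> exists t1 t2,
  0 < t1 < eps /\ (PI/2 - eps < t2 < PI/2) /\ phi t1 <= - (PI/2) + eps /\ PI/2 - eps <= phi t2.
Proof.
  intros He. pose proof PI_RGT_0. pose proof g_pos as Hg.
  set (K := tan (PI/2 - eps)).
  assert (HK : 0 < K) by (apply tan_gt_0; lra).
  assert (HatK : atan K = PI/2 - eps) by (apply atan_tan; lra).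
  set (T2 := Rmax (K+1) ((2*g*K + a)/b + 1)).
  assert (HT2a : K + 1 <= T2) by apply Rmax_l.
  assert (HT2b : (2*g*K + a)/b + 1 <= T2) by apply Rmax_r.
  assert (HT2c : 2*g*K + a <= b * T2).
  { apply Rmult_le_compat_l with (r := b) in HT2b; [|lra].
    replace (b * ((2*g*K+a)/b + 1)) with (2*g*K + a + b) in HT2b by (field; lra). lra. }
  set (T1 := Rmin (tan eps / 2) (Rmin 1 (a / (2*g*K + b)))).
  assert (Hte : 0 < tan eps) by (apply tan_gt_0; lra).
  assert (Hq : 0 < a / (2*g*K+b)) by (apply Rdiv_lt_0_compat; nra).
  assert (HT1p : 0 < T1) by (unfold T1; repeat apply Rmin_pos; lra).
  assert (HT1a : T1 <= tan eps / 2) by apply Rmin_l.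
  assert (HT1b : T1 <= 1) by (eapply Rle_trans; [apply Rmin_r| apply Rmin_l]).
  assert (HT1c : T1 <= a / (2*g*K+b)) by (eapply Rle_trans; [apply Rmin_r| apply Rmin_r]).
  assert (HT1d : (2*g*K + b) * T1 <= a).
  { apply Rmult_le_compat_l with (r := 2*g*K+b) in HT1c; [|nra].
    replace ((2*g*K+b) * (a / (2*g*K+b))) with a in HT1c by (field; nra). lra. }
  exists (atan T1), (atan T2).
  pose proof (atan_bound T1). pose proof (atan_bound T2).
  split; [split|split; [split|split]].
  - rewrite <- atan_0. apply atan_increasing. lra.
  - rewrite <- (atan_tan eps) by lra. apply atan_increasing. lra.
  - rewrite <- HatK. apply atan_increasing. lra.
  - lra.
  - unfold phi. rewrite UU_atan by lra.
    replace (- (PI/2) + eps) with (atan (-K)) by (rewrite atan_opp; lra).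
    assert (0 < 2*g*T1) by nra.
    assert (b*T1^2 <= b*T1) by (simpl; rewrite Rmult_1_r; apply Rmult_le_compat_l; nra).
    apply atan_le. apply Rmult_le_reg_r with (2*g*T1). nra.
    unfold Rdiv. rewrite Rmult_assoc, Rinv_l, Rmult_1_r by (apply Rgt_not_eq; lra). lra.
  - unfold phi. rewrite UU_atan by lra. rewrite <- HatK.
    assert (0 < 2*g*T2) by nra.
    assert ((2*g*K+a)*T2 <= b*T2*T2) by (apply Rmult_le_compat_r; lra).
    assert (a <= a * T2) by nra.
    apply atan_le. apply Rmult_le_reg_r with (2*g*T2). nra.
    replace ((b * T2 ^ 2 - a) / (2 * g * T2) * (2 * g * T2)) with (b * T2 ^ 2 - a) by (field; repeat split; apply Rgt_not_eq; nra). lra.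
Qed.

Lemma piece a' b' x y : 0 < a' -> 0 < b' -> x <= y ->
  0 <= RInt (fI a' b') x y <= / Rmin a' b' * (y - x).
Proof.
  intros Ha' Hb' Hxy.
  assert (0 < Rmin a' b') by (apply Rmin_pos; lra).
  assert (0 < Rmax a' b') by (eapply Rlt_le_trans; [exact Ha'|apply Rmax_l]).
  split.
  - apply Rle_trans with (/ Rmax a' b' * (y - x)).
    apply Rmult_le_pos. apply Rlt_le, Rinv_0_lt_compat; lra. lra.
    apply RInt_const_ge; auto. apply fI_ex; auto. intros.
    apply (fI_bounds a' b' x0 (Rmin a' b') (Rmax a' b')); auto using Rmin_l, Rmin_r, Rmax_l, Rmax_r.
  - apply RInt_const_le; auto. apply fI_ex; auto. intros.
    apply (fI_bounds a' b' x0 (Rmin a' b') (Rmax a' b')); auto using Rmin_l, Rmin_r, Rmax_l, Rmax_r.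
Qed.

Lemma fI_even a' b' x : fI a' b' (- x) = fI a' b' x.
Proof. unfold fI, Dq. rewrite cos_neg, sin_neg. f_equal. f_equal. ring. Qed.

Lemma II_even a' b' : 0 < a' -> 0 < b' -> RInt (fI a' b') (- (PI/2)) 0 = II a' b'.
Proof.
  intros. unfold II.
  assert (H1 : is_RInt (fI a' b') (- 0) (- (PI/2)) (RInt (fI a' b') 0 (- (PI/2)))).
  { rewrite Ropp_0. apply (RInt_correct (V:=R_CompleteNormedModule)). apply fI_ex; auto. }
  apply (is_RInt_comp_opp (V:=R_NormedModule)) in H1.
  apply (is_RInt_unique (V:=R_CompleteNormedModule)) in H1.
  rewrite <- (opp_RInt_swap (V:=R_CompleteNormedModule)) by (apply fI_ex; auto).
  rewrite <- H1. rewrite (RInt_opp (V:=R_CompleteNormedModule)).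
  2: { apply (ex_RInt_ext (V:=R_CompleteNormedModule) (fI a' b')). intros. rewrite fI_even. reflexivity. apply fI_ex; auto. }
  rewrite opp_opp. apply RInt_ext. intros. apply fI_even.
Qed.

Lemma small_zero x C : 0 <= C -> (forall eps, 0 < eps < PI/4 -> Rabs x <= C * eps) -> x = 0.
Proof.
  intros HC H. pose proof PI_RGT_0.
  destruct (Req_dec x 0) as [|Hx]; auto. exfalso.
  assert (Hax : 0 < Rabs x) by (apply Rabs_pos_lt; auto).
  set (e := Rmin (PI/8) (Rabs x / (2 * (C + 1)))).
  assert (He1 : e <= PI/8) by apply Rmin_l.
  assert (He2 : e <= Rabs x / (2 * (C+1))) by apply Rmin_r.
  assert (He0 : 0 < e) by (apply Rmin_pos; [lra| apply Rdiv_lt_0_compat; lra]).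
  specialize (H e ltac:(lra)).
  assert (C * e <= Rabs x / 2).
  { apply Rle_trans with ((C+1) * e). nra.
    apply Rmult_le_compat_l with (r := C+1) in He2; [|lra].
    replace ((C+1) * (Rabs x / (2 * (C+1)))) with (Rabs x / 2) in He2 by (field; lra). lra. }
  lra.
Qed.

Lemma chas a' b' x y z : 0 < a' -> 0 < b' ->
  RInt (fI a' b') x y + RInt (fI a' b') y z = RInt (fI a' b') x z.
Proof. intros. apply (RInt_Chasles (V:=R_CompleteNormedModule)); apply fI_ex; auto. Qed.

Theorem gauss_inv : II a b = II m g.
Proof.
  pose proof g_pos as Hg. pose proof m_pos as Hm. pose proof PI_RGT_0.
  set (K1 := / Rmin a b). set (K2 := / Rmin m g).
  assert (HK1 : 0 < K1) by (apply Rinv_0_lt_compat, Rmin_pos; lra).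
  assert (HK2 : 0 < K2) by (apply Rinv_0_lt_compat, Rmin_pos; lra).
  assert (Hx : 2 * II a b - 2 * II m g = 0).
  2: lra.
  apply (small_zero _ (4 * K1 + 2 * K2)). lra.
  intros eps He.
  destruct (pick_t eps He) as [t1 [t2 [Ht1 [Ht2 [Hp1 Hp2]]]]].
  pose proof (atan_bound (UU t1)). pose proof (atan_bound (UU t2)).
  fold (phi t1) in H0. fold (phi t2) in H1.
  assert (EA : II a b = RInt (fI a b) 0 t1 + RInt (fI a b) t1 t2 + RInt (fI a b) t2 (PI/2)).
  { unfold II. rewrite <- (chas a b 0 t1 (PI/2)) by auto.
    rewrite <- (chas a b t1 t2 (PI/2)) by auto. ring. }
  assert (EB : 2 * II m g = RInt (fI m g) (-(PI/2)) (phi t1) + RInt (fI m g) (phi t1) (phi t2)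
                  + RInt (fI m g) (phi t2) (PI/2)).
  { replace (2 * II m g) with (RInt (fI m g) (-(PI/2)) 0 + II m g) by (rewrite II_even by auto; ring).
    unfold II. rewrite (chas m g (-(PI/2)) 0 (PI/2)) by auto.
    rewrite <- (chas m g (-(PI/2)) (phi t1) (PI/2)) by auto.
    rewrite <- (chas m g (phi t1) (phi t2) (PI/2)) by auto. ring. }
  rewrite EA, EB. rewrite sub_int by lra.
  pose proof (piece a b 0 t1 Ha Hb ltac:(lra)).
  pose proof (piece a b t2 (PI/2) Ha Hb ltac:(lra)).
  pose proof (piece m g (-(PI/2)) (phi t1) Hm Hg ltac:(lra)).
  pose proof (piece m g (phi t2) (PI/2) Hm Hg ltac:(lra)).
  fold K1 K2 in H2, H3, H4, H5.
  assert (K1 * (t1 - 0) <= K1 * eps) by (apply Rmult_le_compat_l; lra).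
  assert (K1 * (PI/2 - t2) <= K1 * eps) by (apply Rmult_le_compat_l; lra).
  assert (K2 * (phi t1 - - (PI/2)) <= K2 * eps) by (apply Rmult_le_compat_l; lra).
  assert (K2 * (PI/2 - phi t2) <= K2 * eps) by (apply Rmult_le_compat_l; lra).
  apply Rabs_le. split; nra.
Qed.

End Gauss.

Lemma II_gauss a b : 0 < a -> 0 < b -> II a b = II ((a+b)/2) (sqrt (a*b)).
Proof. intros. apply gauss_inv; auto. Qed.

Definition Eab (al t : R) := al^2 * cos t ^ 2 + (1 + 2*al^2)/4 * sin t ^ 2.
Definition fa (al t : R) := / sqrt (Eab al t).
Definition Fm (al : R) := 2 * RInt (fa al) 0 (PI/2).

Lemma Eab_Dq al t : 0 <= al -> Eab al t = Dq al (sqrt (1 + 2*al^2)/2) t.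
Proof.
  intros. unfold Eab, Dq. f_equal. unfold Rdiv. rewrite Rpow_mult_distr, pow2_sqrt. 
  simpl. field. pose proof (pow2_ge_0 al). lra.
Qed.

Lemma L_alpha_Fm al : 0 < al -> L_alpha al = Fm al.
Proof.
  intros Hal. unfold L_alpha.
  assert (Hb : 0 < sqrt (1 + 2*al^2)/2).
  { assert (0 < sqrt (1 + 2 * al^2)) by (apply sqrt_lt_R0; pose proof (pow2_ge_0 al); lra). lra. }
  rewrite (AGM_II II_gauss) by auto.
  assert (HI : 0 < II al (sqrt (1 + 2 * al ^ 2) / 2)).
  { pose proof (II_bounds al (sqrt (1 + 2 * al ^ 2) / 2) (Rmin al (sqrt (1 + 2 * al ^ 2) / 2)) (Rmax al (sqrt (1 + 2 * al ^ 2) / 2))) as HB.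
    assert (0 < Rmin al (sqrt (1 + 2 * al ^ 2) / 2)) by (apply Rmin_pos; lra).
    assert (0 < Rmax al (sqrt (1 + 2 * al ^ 2) / 2)) by (eapply Rlt_le_trans; [exact Hal|apply Rmax_l]).
    destruct HB as [HB _]; auto using Rmin_l, Rmin_r, Rmax_l, Rmax_r.
    pose proof PI_RGT_0.
    eapply Rlt_le_trans; [|exact HB]. apply Rmult_lt_0_compat. apply Rinv_0_lt_compat; lra. lra. }
  unfold Fm, II. rewrite (RInt_ext (fa al) (fI al (sqrt (1 + 2 * al ^ 2) / 2))).
  2: { intros. unfold fa, fI. rewrite Eab_Dq by lra. reflexivity. }
  pose proof PI_RGT_0. unfold II in HI. field. split; lra.
Qed.

Lemma Eab_pos al t : al <> 0 -> 0 < Eab al t.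
Proof.
  intros H. unfold Eab. pose proof (sin2_cos2 t). unfold Rsqr in H0.
  assert (0 < al^2) by (apply pow2_gt_0; auto).
  assert (0 <= cos t ^2) by nra. assert (0 <= sin t ^2) by nra.
  assert (0 < (1 + 2*al^2)/4) by lra.
  destruct (Rle_lt_dec (sin t ^ 2) 0).
  - assert (cos t ^ 2 = 1) by nra. nra.
  - nra.
Qed.

Definition dfa (al t : R) := - (2*al*cos t ^ 2 + al * sin t ^ 2) / (2 * Eab al t * sqrt (Eab al t)).

Lemma fa_derive al t : al <> 0 -> is_derive (fun u => fa u t) al (dfa al t).
Proof.
  intros H. pose proof (Eab_pos al t H) as HE. unfold fa, dfa. unfold Eab in *.
  auto_derive.
  - split; [lra|]. split; [|auto]. apply Rgt_not_eq, sqrt_lt_R0; lra.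
  - pose proof (sqrt_lt_R0 _ HE). pose proof (sqrt_sqrt _ (Rlt_le _ _ HE)).
    set (sq := sqrt (al ^ 2 * cos t ^ 2 + (1 + 2 * al ^ 2) / 4 * sin t ^ 2)) in *.
    set (E := al ^ 2 * cos t ^ 2 + (1 + 2 * al ^ 2) / 4 * sin t ^ 2) in *.
    assert (HE' : al * (al * 1) * (cos t * (cos t * 1)) + (1 + 2 * (al * (al * 1))) * / 4 * (sin t * (sin t * 1)) = E) by (unfold E; field).
    rewrite HE'. fold sq.
    replace (sq ^ 3) with (E * sq) by (rewrite <- H1; ring).
    clearbody sq E. rewrite <- H1.
    field. apply Rgt_not_eq; lra.
Qed.

Lemma cpt_of_ex_derive f x : ex_derive f x -> continuity_pt f x.
Proof.
  intros H. apply continuity_pt_filterlim.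
  apply (ex_derive_continuous (V:=R_NormedModule) f x H).
Qed.

Lemma c2_comp1 (h : R -> R) (g : R -> R -> R) x y :
  ex_derive h (g x y) -> continuity_2d_pt g x y -> continuity_2d_pt (fun u v => h (g u v)) x y.
Proof. intros. apply continuity_1d_2d_pt_comp; auto. apply cpt_of_ex_derive; auto. Qed.

Lemma Eab_c2 x y : continuity_2d_pt Eab x y.
Proof.
  unfold Eab.
  apply (continuity_2d_pt_plus (fun u v => u^2 * cos v ^2) (fun u v => (1 + 2*u^2)/4 * sin v ^ 2)).
  - apply (continuity_2d_pt_mult (fun u v => u^2) (fun u v => cos v ^ 2)).
    + apply (c2_comp1 (fun z => z^2) (fun u v => u)). auto_derive; auto. apply continuity_2d_pt_id1.
    + apply (c2_comp1 (fun z => cos z^2) (fun u v => v)). auto_derive; auto. apply continuity_2d_pt_id2.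
  - apply (continuity_2d_pt_mult (fun u v => (1 + 2*u^2)/4) (fun u v => sin v ^ 2)).
    + apply (c2_comp1 (fun z => (1 + 2*z^2)/4) (fun u v => u)). auto_derive; auto. apply continuity_2d_pt_id1.
    + apply (c2_comp1 (fun z => sin z^2) (fun u v => v)). auto_derive; auto. apply continuity_2d_pt_id2.
Qed.

Lemma dfa_c2 x y : x <> 0 -> continuity_2d_pt dfa x y.
Proof.
  intros Hx. pose proof (Eab_pos x y Hx) as HE. unfold dfa.
  apply (continuity_2d_pt_mult (fun u v => - (2*u*cos v ^ 2 + u * sin v ^ 2))
           (fun u v => / (2 * Eab u v * sqrt (Eab u v)))).
  - apply (continuity_2d_pt_opp (fun u v => (2*u*cos v ^ 2 + u * sin v ^ 2))).
    apply (continuity_2d_pt_plus (fun u v => 2*u*cos v ^ 2) (fun u v => u * sin v ^ 2)).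
    + apply (continuity_2d_pt_mult (fun u v => 2*u) (fun u v => cos v ^ 2)).
      * apply (c2_comp1 (fun z => 2*z) (fun u v => u)). auto_derive; auto. apply continuity_2d_pt_id1.
      * apply (c2_comp1 (fun z => cos z^2) (fun u v => v)). auto_derive; auto. apply continuity_2d_pt_id2.
    + apply (continuity_2d_pt_mult (fun u v => u) (fun u v => sin v ^ 2)).
      * apply continuity_2d_pt_id1.
      * apply (c2_comp1 (fun z => sin z^2) (fun u v => v)). auto_derive; auto. apply continuity_2d_pt_id2.
  - apply (continuity_2d_pt_inv (fun u v => 2 * Eab u v * sqrt (Eab u v))).
    + apply (continuity_2d_pt_mult (fun u v => 2 * Eab u v) (fun u v => sqrt (Eab u v))).
      * apply (continuity_2d_pt_mult (fun u v => 2) (fun u v => Eab u v)).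
        apply continuity_2d_pt_const. apply Eab_c2.
      * apply continuity_1d_2d_pt_comp. apply continuity_pt_sqrt; lra. apply Eab_c2.
    + apply Rgt_not_eq. apply Rmult_lt_0_compat. lra. apply sqrt_lt_R0; lra.
Qed.

Lemma locally_pos al : 0 < al -> locally al (fun y => 0 < y).
Proof.
  intros H. assert (Hp : 0 < al/2) by lra. exists (mkposreal _ Hp). intros y Hy.
  unfold ball in Hy; simpl in Hy; unfold AbsRing_ball, abs, minus, plus, opp in Hy; simpl in Hy.
  apply Rabs_lt_between in Hy. lra.
Qed.

Lemma fa_cont al t : al <> 0 -> continuous (fa al) t.
Proof.
  intros H. apply (ex_derive_continuous (V:=R_NormedModule) (fa al) t).
  pose proof (Eab_pos al t H) as HE. unfold fa, Eab in *. auto_derive.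
  split; [lra|]. split; [|auto]. apply Rgt_not_eq, sqrt_lt_R0; lra.
Qed.

Lemma fa_ex al x y : al <> 0 -> ex_RInt (fa al) x y.
Proof. intros. apply (@ex_RInt_continuous R_CompleteNormedModule). intros. apply fa_cont; auto. Qed.

Lemma dfa_cont al t : al <> 0 -> continuous (dfa al) t.
Proof.
  intros H. apply (ex_derive_continuous (V:=R_NormedModule) (dfa al) t).
  pose proof (Eab_pos al t H) as HE. unfold dfa, Eab in *. auto_derive.
  replace (al * (al * 1) * (cos t * (cos t * 1)) + (1 + 2 * (al * (al * 1))) / 4 * (sin t * (sin t * 1)))
    with (al ^ 2 * cos t ^ 2 + (1 + 2 * al ^ 2) / 4 * sin t ^ 2) by field.
  assert (0 < sqrt (al ^ 2 * cos t ^ 2 + (1 + 2 * al ^ 2) / 4 * sin t ^ 2)) by (apply sqrt_lt_R0; lra).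
  split; [lra|]. split; [|auto]. apply Rgt_not_eq. apply Rmult_lt_0_compat; lra.
Qed.

Lemma dfa_ex al x y : al <> 0 -> ex_RInt (dfa al) x y.
Proof. intros. apply (@ex_RInt_continuous R_CompleteNormedModule). intros. apply dfa_cont; auto. Qed.

Lemma Fm_derive al : 0 < al -> is_derive Fm al (2 * RInt (dfa al) 0 (PI/2)).
Proof.
  intros Hal. unfold Fm. apply is_derive_scal.
  replace (RInt (dfa al) 0 (PI/2)) with (RInt (fun t => Derive (fun u => fa u t) al) 0 (PI/2)).
  2: { apply RInt_ext. intros. apply is_derive_unique. apply fa_derive. lra. }
  apply (is_derive_RInt_param fa 0 (PI/2) al).
  - eapply filter_imp; [|apply locally_pos; exact Hal]. intros y Hy t _.
    eexists. apply fa_derive. lra.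
  - intros t _. apply continuity_2d_pt_ext_loc with (f := dfa).
    + assert (Hp : 0 < al/2) by lra. exists (mkposreal _ Hp). intros u v Hu _.
      simpl in Hu. apply Rabs_lt_between in Hu. symmetry. apply is_derive_unique. apply fa_derive. lra.
    + apply dfa_c2. lra.
  - eapply filter_imp; [|apply locally_pos; exact Hal]. intros y Hy.
    apply fa_ex. lra.
Qed.

Definition h0 (al t : R) := al^2 * cos t / (Eab al t * sqrt (Eab al t)).
Definition GG (al t : R) := sin t / sqrt (Eab al t).

Lemma GG_derive al t : al <> 0 -> is_derive (GG al) t (h0 al t).
Proof.
  intros H. pose proof (Eab_pos al t H) as HE. unfold GG, h0. unfold Eab in *.
  auto_derive.
  - split; [lra|]. split; [|auto]. apply Rgt_not_eq, sqrt_lt_R0; lra.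
  - replace (al * (al * 1) * (cos t * (cos t * 1)) + (1 + 2 * (al * (al * 1))) / 4 * (sin t * (sin t * 1)))
      with (al ^ 2 * cos t ^ 2 + (1 + 2 * al ^ 2) / 4 * sin t ^ 2) by field.
    pose proof (sqrt_lt_R0 _ HE).
    set (r := sqrt (al ^ 2 * cos t ^ 2 + (1 + 2 * al ^ 2) / 4 * sin t ^ 2)) in *.
    pose proof (sin2_cos2 t) as Hsc. unfold Rsqr in Hsc.
    replace (al ^ 2 * cos t) with (al ^ 2 * cos t * (sin t * sin t + cos t * cos t)) by (rewrite Hsc; ring).
    assert (Hr : r * r = al ^ 2 * cos t ^ 2 + (1 + 2 * al ^ 2) / 4 * sin t ^ 2) by (apply sqrt_sqrt; lra). rewrite Hr. clearbody r. field. split; apply Rgt_not_eq; lra.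
Qed.

Lemma h0_cont al t : al <> 0 -> continuous (h0 al) t.
Proof.
  intros H. apply (ex_derive_continuous (V:=R_NormedModule) (h0 al) t).
  pose proof (Eab_pos al t H) as HE. unfold h0, Eab in *. auto_derive.
  replace (al * (al * 1) * (cos t * (cos t * 1)) + (1 + 2 * (al * (al * 1))) / 4 * (sin t * (sin t * 1)))
    with (al ^ 2 * cos t ^ 2 + (1 + 2 * al ^ 2) / 4 * sin t ^ 2) by field.
  assert (0 < sqrt (al ^ 2 * cos t ^ 2 + (1 + 2 * al ^ 2) / 4 * sin t ^ 2)) by (apply sqrt_lt_R0; lra).
  split; [lra|]. split; [|auto]. apply Rgt_not_eq. apply Rmult_lt_0_compat; lra.
Qed.

Lemma h0_ex al x y : al <> 0 -> ex_RInt (h0 al) x y.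
Proof. intros. apply (@ex_RInt_continuous R_CompleteNormedModule). intros. apply h0_cont; auto. Qed.

Lemma h0_int al : 0 < al -> RInt (h0 al) 0 (PI/2) = 2 / sqrt (1 + 2*al^2).
Proof.
  intros Hal.
  assert (H := is_RInt_derive (V:=R_CompleteNormedModule) (GG al) (h0 al) 0 (PI/2)).
  apply (is_RInt_unique (V:=R_CompleteNormedModule)). 
  replace (2 / sqrt (1 + 2*al^2)) with (minus (GG al (PI/2)) (GG al 0)).
  apply H. intros. apply GG_derive; lra. intros. apply h0_cont; lra.
  change (minus (GG al (PI/2)) (GG al 0)) with (GG al (PI/2) - GG al 0).
  unfold GG, Eab. rewrite sin_PI2, cos_PI2, sin_0, cos_0.
  assert (0 < 1 + 2 * al^2) by (pose proof (pow2_ge_0 al); lra).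
  assert (E : sqrt (al ^ 2 * 0 ^ 2 + (1 + 2 * al ^ 2) / 4 * 1 ^ 2) = sqrt (1 + 2*al^2) / 2).
  { apply sqrt_lem_1. nra. pose proof (sqrt_lt_R0 _ H0). lra.
    pose proof (sqrt_sqrt _ (Rlt_le _ _ H0)).
    transitivity (sqrt (1 + 2 * al ^ 2) * sqrt (1 + 2 * al ^ 2) / 4). field. rewrite H1. field. }
  rewrite E. pose proof (sqrt_lt_R0 _ H0). match goal with |- ?x = ?y => change (@eq R x y) end. replace (0 / sqrt (al ^ 2 * 1 ^ 2 + (1 + 2 * al ^ 2) / 4 * 0 ^ 2)) with 0 by (unfold Rdiv; ring). field. lra.
Qed.

Lemma X_bound al t : 0 < al <= 1/2 -> 0 < t < PI/2 ->
  -8 * al <= -2 * al * dfa al t - 2 * h0 al t <= 4 * al.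
Proof.
  intros Hal Ht.
  assert (Hs : 0 < sin t) by (apply sin_gt_0; lra).
  assert (Hc : 0 < cos t) by (apply cos_gt_0; lra).
  pose proof (sin2_cos2 t) as Hsc. unfold Rsqr in Hsc.
  set (s := sin t) in *. set (c := cos t) in *.
  assert (Hc1 : c <= 1) by nra.
  assert (HE : 0 < Eab al t) by (apply Eab_pos; lra).
  set (E := Eab al t) in *.
  assert (HEd : E = al^2 * c^2 + (1 + 2*al^2)/4 * s^2) by reflexivity.
  set (r := sqrt E).
  assert (Hr : 0 < r) by (apply sqrt_lt_R0; lra).
  assert (Hrr : r * r = E) by (apply sqrt_sqrt; lra).
  assert (Hrd : sqrt E = r) by reflexivity.
  clearbody r.
  assert (HEs : s^2/4 <= E) by (rewrite HEd; pose proof (pow2_ge_0 (al*c)); pose proof (pow2_ge_0 s); nra).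
  assert (Hc2 : c^2 = 1 - s^2) by (simpl; nra).
  assert (0 <= s^2 * ((1+2*al^2)/4 - al^2)) by (apply Rmult_le_pos; [apply pow2_ge_0| nra]).
  assert (HEa : al^2 <= E) by (rewrite HEd, Hc2; lra).
  assert (Hra : al <= r) by (destruct (Rle_lt_dec al r); auto; assert (r * r < al * al) by (apply Rmult_le_0_lt_compat; lra); nra).
  assert (X : -2 * al * dfa al t - 2 * h0 al t = (al^2 * s^2 - 2 * al^2 * c * (1 - c)) / (E * r)).
  { unfold dfa, h0. fold s c E. rewrite Hrd. field. split; apply Rgt_not_eq; lra. }
  rewrite X. clearbody E s c. clear X.
  assert (HW : 0 < E * r) by nra.
  assert (A1 : s^2/4 * al <= E * r) by nra.
  assert (A2 : s^2/4 * (al * c) <= E * r) by nra.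
  assert (A3 : 1 - c <= s^2) by nra.
  split.
  - apply Rmult_le_reg_r with (E * r); auto.
    replace ((al ^ 2 * s ^ 2 - 2 * al ^ 2 * c * (1 - c)) / (E * r) * (E * r)) with (al ^ 2 * s ^ 2 - 2 * al ^ 2 * c * (1 - c)) by (field; split; apply Rgt_not_eq; lra).
    assert (al^2 * c * (1 - c) <= al^2 * c * s^2) by (apply Rmult_le_compat_l; nra).
    nra.
  - apply Rmult_le_reg_r with (E * r); auto.
    replace ((al ^ 2 * s ^ 2 - 2 * al ^ 2 * c * (1 - c)) / (E * r) * (E * r)) with (al ^ 2 * s ^ 2 - 2 * al ^ 2 * c * (1 - c)) by (field; split; apply Rgt_not_eq; lra).
    assert (0 <= al^2 * c * (1 - c)) by (apply Rmult_le_pos; nra).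
    nra.
Qed.

Lemma dFm_bounds al : 0 < al <= 1/2 ->
  4 / sqrt (1 + 2*al^2) - 4*PI*al <= - al * (2 * RInt (dfa al) 0 (PI/2)) <= 4 / sqrt (1 + 2*al^2) + 2*PI*al.
Proof.
  intros Hal. pose proof PI_RGT_0.
  assert (Hn : al <> 0) by lra.
  set (X := fun t => -2*al*dfa al t - 2*h0 al t).
  assert (HX : is_RInt X 0 (PI/2) (-2*al*RInt (dfa al) 0 (PI/2) - 2*RInt (h0 al) 0 (PI/2))).
  { exact (is_RInt_minus (V:=R_NormedModule) _ _ _ _ _ _
      (is_RInt_scal _ _ _ (-2*al) _ (RInt_correct (V:=R_CompleteNormedModule) _ _ _ (dfa_ex al 0 (PI/2) Hn)))
      (is_RInt_scal _ _ _ 2 _ (RInt_correct (V:=R_CompleteNormedModule) _ _ _ (h0_ex al 0 (PI/2) Hn)))). }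
  assert (HXe : ex_RInt X 0 (PI/2)) by (eexists; exact HX).
  apply (is_RInt_unique (V:=R_CompleteNormedModule)) in HX.
  assert (B1 : RInt X 0 (PI/2) <= 4 * al * (PI/2 - 0)).
  { apply RInt_const_le; auto. lra. intros. apply X_bound; auto. }
  assert (B2 : -8 * al * (PI/2 - 0) <= RInt X 0 (PI/2)).
  { apply RInt_const_ge; auto. lra. intros. apply X_bound; auto. }
  rewrite HX in B1, B2. rewrite h0_int in B1, B2 by lra.
  split; lra.
Qed.

Lemma inv_deriv (F dF G : R -> R) lb ub x :
  lb < x < ub ->
  (forall v, G ub <= v <= G lb -> is_derive F v (dF v)) ->
  (forall L, lb <= L <= ub -> F (G L) = L) ->
  (forall L1 L2, lb <= L1 -> L1 <= L2 -> L2 <= ub -> G L2 <= G L1) ->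
  continuity_pt G x ->
  dF (G x) <> 0 ->
  is_derive G x (1 / dF (G x)).
Proof.
  intros Hx HF HFG HG Hc Hd.
  set (f := fun v => F (- v)). set (g := fun L => - G L).
  assert (Hf : forall v, g lb <= v <= g ub -> derivable_pt_lim f v (- dF (- v))).
  { intros v Hv. apply is_derive_Reals. unfold f.
    replace (- dF (- v)) with (scal (-1) (dF (- v))) by (unfold scal; simpl; unfold mult; simpl; ring).
    apply (is_derive_comp F (fun v => - v) v). apply HF. unfold g in Hv.
    pose proof (HG lb ub ltac:(lra) ltac:(lra) ltac:(lra)). lra.
    auto_derive. auto. ring. }
  set (Prf := fun v (Hv : g lb <= v <= g ub) => exist (fun l => derivable_pt_lim f v l) _ (Hf v Hv)).
  assert (Hgx : g lb <= g x <= g ub).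
  { unfold g. pose proof (HG lb x ltac:(lra) ltac:(lra) ltac:(lra)).
    pose proof (HG x ub ltac:(lra) ltac:(lra) ltac:(lra)). lra. }
  assert (H := derivable_pt_lim_recip_interv f g lb ub x Prf).
  assert (Hcg : continuity_pt g x).
  { unfold g. apply continuity_pt_opp. auto. }
  specialize (H Hcg ltac:(lra) Hx Hgx).
  assert (Hid : forall x0 : R, lb <= x0 <= ub -> comp f g x0 = id x0).
  { intros. unfold comp, f, g, id. rewrite Ropp_involutive. apply HFG; auto. }
  specialize (H Hid).
  assert (Hdp : derive_pt f (g x) (Prf (g x) Hgx) = - dF (G x)).
  { apply derive_pt_eq_0. unfold g. rewrite <- (Ropp_involutive (G x)) at 2.
    apply Hf. auto. }
  rewrite Hdp in H. specialize (H ltac:(lra)).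
  apply is_derive_Reals in H. apply is_derive_opp in H.
  replace (1 / dF (G x)) with (opp (1 / - dF (G x))) by (unfold opp; simpl; field; auto).
  eapply is_derive_ext; [|exact H]. intro t. unfold g, opp; simpl. ring.
Qed.

Definition sA a := sqrt (1 - 4 * a ^ 4).
Definition hh a := sqrt (2 / (1 + sA a)).
Definition gy a := a ^ 2 * hh a.
Definition dgy a := 2 * a * hh a + a ^ 2 * (8 * a ^ 3 / (hh a * sA a * (1 + sA a) ^ 2)).

Lemma a4_small a : 0 < a <= 1/2 -> 0 < 1 - 4 * a ^ 4.
Proof. intros. assert (a^4 <= 1/16). { assert (a^2 <= 1/4) by nra. nra. } lra. Qed.

Lemma sA_pos a : 0 < a <= 1/2 -> 0 < sA a.
Proof. intros. apply sqrt_lt_R0, a4_small; auto. Qed.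

Lemma hh_pos a : 0 < a <= 1/2 -> 0 < hh a.
Proof. intros. pose proof (sA_pos a H). apply sqrt_lt_R0. apply Rdiv_lt_0_compat; lra. Qed.

Lemma gy_derive a : 0 < a <= 1/2 -> is_derive gy a (dgy a).
Proof.
  intros Ha. pose proof (a4_small a Ha). pose proof (sA_pos a Ha). pose proof (hh_pos a Ha).
  unfold gy, dgy, hh, sA in *. auto_derive.
  - replace (1 + - (4 * (a * (a * (a * (a * 1)))))) with (1 - 4*a^4) by ring.
    split; auto. split. apply Rgt_not_eq; lra. split; auto.
    apply Rdiv_lt_0_compat; lra.
  - replace (1 + - (4 * (a * (a * (a * (a * 1)))))) with (1 - 4*a^4) by ring.
    change (2 * / (1 + sqrt (1 - 4 * a ^ 4))) with (2 / (1 + sqrt (1 - 4 * a ^ 4))).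
    set (S := sqrt (1 - 4 * a ^ 4)) in *. set (Hh := sqrt (2 / (1 + S))) in *.
    clearbody S Hh. field. repeat split; apply Rgt_not_eq; lra.
Qed.

Lemma ratio_gy a : 0 < a <= 1/2 -> a * dgy a / gy a = 2 + 4 * a ^ 4 / (sA a * (1 + sA a)).
Proof.
  intros Ha. pose proof (a4_small a Ha). pose proof (sA_pos a Ha). pose proof (hh_pos a Ha).
  assert (Hh2 : hh a * hh a = 2 / (1 + sA a)) by (apply sqrt_sqrt; apply Rlt_le, Rdiv_lt_0_compat; lra).
  unfold dgy, gy.
  set (S := sA a) in *. set (h := hh a) in *. clearbody S h.
  transitivity (2 + 8 * a^4 / (h * h * S * (1 + S)^2)).
  field. repeat split; apply Rgt_not_eq; lra.
  rewrite Hh2. field. repeat split; apply Rgt_not_eq; lra.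
Qed.

Lemma ratio_bound a : 0 < a <= 1/2 -> Rabs (a * dgy a / gy a - 2) <= 8 * a.
Proof.
  intros Ha. rewrite ratio_gy by auto. pose proof (a4_small a Ha).
  assert (HS : 1/2 <= sA a).
  { unfold sA. rewrite <- (sqrt_pow2 (1/2)) by lra. apply sqrt_le_1_alt.
    assert (a^4 <= 1/16). { assert (a^2 <= 1/4) by nra. nra. } lra. }
  replace (2 + 4 * a ^ 4 / (sA a * (1 + sA a)) - 2) with (4 * a ^ 4 / (sA a * (1 + sA a))) by ring.
  assert (0 < sA a * (1 + sA a)) by nra.
  rewrite Rabs_pos_eq. 2: apply Rlt_le, Rdiv_lt_0_compat; [|lra]; apply Rmult_lt_0_compat; [lra| apply pow_lt; lra].
  apply Rmult_le_reg_r with (sA a * (1 + sA a)); auto.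
  replace (4 * a ^ 4 / (sA a * (1 + sA a)) * (sA a * (1 + sA a))) with (4 * a^4) by (field; lra).
  assert (a^3 <= 1) by (assert (a^2 <= 1) by nra; nra).
  assert (3/4 <= sA a * (1 + sA a)) by nra.
  assert (a^4 <= a) by (replace (a^4) with (a * a^3) by ring; nra).
  nra.
Qed.

Lemma y0_eq x0 y0 a : x0 > y0 -> y0 > 0 -> x0 ^ 2 + y0 ^ 2 = 1 -> x0 * y0 = a ^ 2 -> 0 < a ->
  y0 = gy a.
Proof.
  intros H1 H2 H3 H4 Ha.
  set (u := y0^2). set (v := x0^2).
  assert (Huv : v - u > 0) by (unfold u, v; nra).
  assert (Hd : (v - u)^2 = 1 - 4 * a^4).
  { replace (1 - 4 * a^4) with ((x0^2 + y0^2)^2 - 4 * (x0*y0)^2).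
    unfold u, v. ring. rewrite H3, H4. ring. }
  assert (Hs : sA a = v - u).
  { unfold sA. rewrite <- Hd. apply sqrt_pow2. lra. }
  assert (Hu : u = (1 - sA a)/2) by (rewrite Hs; unfold u, v in *; lra).
  assert (HS : 0 <= sA a) by (unfold sA; apply sqrt_pos).
  assert (Hgp : 0 < gy a).
  { unfold gy, hh. apply Rmult_lt_0_compat. apply pow_lt; lra. apply sqrt_lt_R0. apply Rdiv_lt_0_compat; lra. }
  apply Rsqr_inj. lra. lra. unfold Rsqr.
  transitivity u. unfold u; ring.
  unfold gy, hh.
  transitivity (a^2 * a^2 * (sqrt (2 / (1 + sA a)) * sqrt (2 / (1 + sA a)))).
  2: ring.
  rewrite sqrt_sqrt by (apply Rlt_le, Rdiv_lt_0_compat; lra).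
  rewrite Hu. 
  assert (Hs2 : sA a * sA a = 1 - 4 * a^4).
  { rewrite Hs. rewrite <- Hd. ring. }
  apply Rmult_eq_reg_r with (2 * (1 + sA a)). 2: apply Rgt_not_eq; lra.
  replace ((1 - sA a) / 2 * (2 * (1 + sA a))) with (1 - sA a * sA a) by field.
  rewrite Hs2. field. lra.
Qed.

Definition dF (a : R) := 2 * RInt (dfa a) 0 (PI/2).

Lemma D_bounds a : 0 < a <= 1/10 -> Rabs (- a * dF a - 4) <= 20 * a /\ 9/4 <= - a * dF a.
Proof.
  intros Ha. pose proof (dFm_bounds a ltac:(lra)) as [B1 B2]. fold (dF a) in B1, B2.
  pose proof PI_4. pose proof PI_RGT_0.
  assert (Hs1 : 1 <= sqrt (1 + 2 * a^2)).
  { apply Rle_trans with (sqrt 1); [rewrite sqrt_1; lra|]. apply sqrt_le_1_alt. pose proof (pow2_ge_0 a). lra. }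
  assert (Hs2 : sqrt (1 + 2 * a^2) <= 1 + a^2).
  { rewrite <- (sqrt_pow2 (1 + a^2)) by (pose proof (pow2_ge_0 a); lra).
    apply sqrt_le_1_alt. pose proof (pow2_ge_0 (a^2)). nra. }
  assert (H4a : 4 / sqrt (1 + 2*a^2) <= 4).
  { apply Rmult_le_reg_r with (sqrt (1 + 2*a^2)). lra.
    replace (4 / sqrt (1 + 2 * a ^ 2) * sqrt (1 + 2 * a ^ 2)) with 4 by (field; lra). nra. }
  assert (H4b : 4 - 4 * a^2 <= 4 / sqrt (1 + 2*a^2)).
  { apply Rmult_le_reg_r with (sqrt (1 + 2*a^2)). lra.
    replace (4 / sqrt (1 + 2 * a ^ 2) * sqrt (1 + 2 * a ^ 2)) with 4 by (field; lra).
    assert (0 <= 4 - 4*a^2) by nra.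
    apply Rle_trans with ((4 - 4*a^2) * (1 + a^2)). apply Rmult_le_compat_l; lra.
    pose proof (pow2_ge_0 (a^2)). nra. }
  assert (a^2 <= a/10) by nra.
  assert (PI * a <= 4 * a) by nra.
  split.
  - apply Rabs_le. split; lra.
  - lra.
Qed.

Lemma Q_bound a : 0 < a <= 1/10 -> Rabs (dgy a / dF a / gy a + 1/2) <= 8 * a.
Proof.
  intros Ha. destruct (D_bounds a Ha) as [D1 D2].
  pose proof (ratio_bound a ltac:(lra)) as R1.
  pose proof (hh_pos a ltac:(lra)).
  assert (Hg : 0 < gy a) by (unfold gy; apply Rmult_lt_0_compat; [apply pow_lt|]; lra).
  set (R := a * dgy a / gy a) in *. set (D := - a * dF a) in *.
  assert (HdF : dF a <> 0) by (intro Hc; unfold D in D2; rewrite Hc in D2; lra).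
  replace (dgy a / dF a / gy a + 1/2) with ((D - 2 * R) / (2 * D)).
  2: { unfold R, D. field. repeat split; auto; lra. }
  assert (Hn : Rabs (D - 2 * R) <= 36 * a).
  { replace (D - 2*R) with ((D - 4) - 2 * (R - 2)) by ring.
    eapply Rle_trans. apply Rabs_triang. rewrite Rabs_Ropp, Rabs_mult, (Rabs_pos_eq 2) by lra. lra. }
  unfold Rdiv. rewrite Rabs_mult, Rabs_inv, (Rabs_pos_eq (2*D)) by lra.
  apply Rle_trans with (36 * a * / (2 * D)).
  apply Rmult_le_compat_r. apply Rlt_le, Rinv_0_lt_compat; lra. auto.
  apply Rmult_le_reg_r with (2 * D). lra.
  replace (36 * a * / (2 * D) * (2 * D)) with (36 * a) by (field; lra). nra.
Qed.

Lemma dF_neg a : 0 < a <= 1/10 -> dF a < 0.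
Proof. intros. destruct (D_bounds a H). nra. Qed.

Lemma Fm_der a : 0 < a -> is_derive Fm a (dF a).
Proof. apply Fm_derive. Qed.

Lemma Fm_decr x y : 0 < x -> x < y -> y < 1/10 -> Fm y < Fm x.
Proof.
  intros. assert (- Fm x < - Fm y); [|lra].
  apply (incr_function (fun a => - Fm a) 0 (1/10) (fun a => - dF a)); simpl; auto.
  - intros. exact (is_derive_opp Fm x0 (dF x0) (Fm_der x0 H2)).
  - intros. pose proof (dF_neg x0 ltac:(lra)). lra.
Qed.

Lemma Fm_log x y : 0 < x -> x < y -> y < 1/10 -> Fm y + 2 * ln y - 2 * ln x < Fm x.
Proof.
  intros. assert (- (Fm x + 2 * ln x) < - (Fm y + 2 * ln y)); [|lra].
  apply (incr_function (fun a => - (Fm a + 2 * ln a)) 0 (1/10) (fun a => - (dF a + 2 / a))); simpl; auto.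
  - intros. 
    assert (Hl : is_derive (fun a => 2 * ln a) x0 (2 / x0)) by (auto_derive; [lra| field; lra]).
    exact (is_derive_opp _ x0 _ (is_derive_plus Fm (fun a => 2 * ln a) x0 _ _ (Fm_der x0 H2) Hl)).
  - intros. destruct (D_bounds x0 ltac:(lra)).
    assert (x0 * (- (dF x0 + 2 / x0)) > 0); [|nra].
    replace (x0 * (- (dF x0 + 2 / x0))) with (- x0 * dF x0 - 2) by (field; lra). lra.
Qed.

Lemma Fm_cont a : 0 < a -> continuity_pt Fm a.
Proof. intros. apply cpt_of_ex_derive. eexists. apply Fm_der; auto. Qed.

Lemma Fm_surj L : Fm (1/20) < L -> exists a, 0 < a < 1/20 /\ Fm a = L.
Proof.
  intros HL.
  set (c := (Fm (1/20) + 2 * ln (1/20) - L) / 2).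
  set (a1 := Rmin (1/40) (exp c)).
  assert (Ha1 : 0 < a1) by (apply Rmin_pos; [lra| apply exp_pos]).
  assert (Ha1b : a1 <= 1/40) by apply Rmin_l.
  assert (Ha1c : ln a1 <= c) by (rewrite <- (ln_exp c); apply ln_le; auto; apply Rmin_r).
  pose proof (Fm_log a1 (1/20) Ha1 ltac:(lra) ltac:(lra)).
  assert (L < Fm a1) by (unfold c in Ha1c; lra).
  destruct (IVT_interv (fun a => L - Fm a) a1 (1/20)) as [a [Ha Hfa]].
  - intros. apply continuity_pt_minus. apply continuity_pt_const. intros u v; auto.
    apply Fm_cont. lra.
  - lra.
  - lra.
  - lra.
  - exists a. assert (a <> 1/20) by (intro; subst; lra). split. split; lra. lra.
Qed.

Definition ainv L := epsilon (inhabits 0) (fun a => 0 < a < 1/20 /\ Fm a = L).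

Lemma ainv_spec L : Fm (1/20) < L -> 0 < ainv L < 1/20 /\ Fm (ainv L) = L.
Proof. intros. unfold ainv. apply epsilon_spec. apply Fm_surj; auto. Qed.

Lemma Fm_le x y : 0 < x -> x <= y -> y < 1/10 -> Fm y <= Fm x.
Proof. intros. destruct H0. left; apply Fm_decr; auto. subst; lra. Qed.

Lemma ainv_decr L1 L2 : Fm (1/20) < L1 -> L1 <= L2 -> ainv L2 <= ainv L1.
Proof.
  intros. destruct (ainv_spec L1 H) as [A1 B1]. destruct (ainv_spec L2 ltac:(lra)) as [A2 B2].
  destruct (Rle_lt_dec (ainv L2) (ainv L1)); auto.
  pose proof (Fm_decr (ainv L1) (ainv L2) ltac:(lra) r ltac:(lra)). lra.
Qed.

Lemma ainv_small L d : 0 < d <= 1/20 -> Fm (1/20) < L -> Fm d < L -> ainv L < d.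
Proof.
  intros. destruct (ainv_spec L H0) as [A B].
  destruct (Rlt_le_dec (ainv L) d); auto.
  pose proof (Fm_le d (ainv L) ltac:(lra) r ltac:(lra)). lra.
Qed.

Lemma ainv_cont L : Fm (1/20) < L -> continuity_pt ainv L.
Proof.
  intros HL. destruct (ainv_spec L HL) as [A B].
  unfold continuity_pt, continue_in, limit1_in, limit_in. intros eps Heps.
  set (a := ainv L) in *.
  set (e := Rmin eps (a/2)).
  assert (He : 0 < e) by (apply Rmin_pos; lra).
  assert (He1 : e <= eps) by apply Rmin_l.
  assert (He2 : e <= a/2) by apply Rmin_r.
  pose proof (Fm_decr (a - e) a ltac:(lra) ltac:(lra) ltac:(lra)).
  pose proof (Fm_decr a (a + e) ltac:(lra) ltac:(lra) ltac:(lra)).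
  exists (Rmin (L - Fm (1/20)) (Rmin (Fm (a - e) - L) (L - Fm (a + e)))).
  split. apply Rmin_pos; [lra| apply Rmin_pos; lra].
  intros x [_ Hx]. simpl in *. unfold R_dist in *.
  pose proof (Rmin_l (L - Fm (1/20)) (Rmin (Fm (a - e) - L) (L - Fm (a + e)))).
  pose proof (Rmin_r (L - Fm (1/20)) (Rmin (Fm (a - e) - L) (L - Fm (a + e)))).
  pose proof (Rmin_l (Fm (a - e) - L) (L - Fm (a + e))).
  pose proof (Rmin_r (Fm (a - e) - L) (L - Fm (a + e))).
  apply Rabs_lt_between in Hx.
  assert (Hx1 : Fm (1/20) < x) by lra.
  destruct (ainv_spec x Hx1) as [A' B'].
  assert (ainv x < a + e).
  { destruct (Rlt_le_dec (ainv x) (a + e)); auto.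
    pose proof (Fm_le (a + e) (ainv x) ltac:(lra) r ltac:(lra)). lra. }
  assert (a - e < ainv x).
  { destruct (Rlt_le_dec (a - e) (ainv x)); auto.
    pose proof (Fm_le (ainv x) (a - e) ltac:(lra) r ltac:(lra)). lra. }
  apply Rabs_lt_between. lra.
Qed.

Lemma sqrt2_bound : 1/20 < / sqrt 2.
Proof.
  assert (sqrt 2 < 2).
  { rewrite <- (sqrt_pow2 2) at 2 by lra. apply sqrt_lt_1_alt. lra. }
  assert (0 < sqrt 2) by (apply sqrt_lt_R0; lra).
  apply Rmult_lt_reg_r with (sqrt 2); auto. rewrite Rinv_l by lra. lra.
Qed.

Theorem lemma8p4 (x y z : R -> R -> R)
  (Hode : forall L, PI * sqrt 2 < L -> forall t,
      is_derive (x L) t (- (x L t * z L t)) /\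
      is_derive (y L) t (y L t * z L t) /\
      is_derive (z L) t (x L t ^ 2 - y L t ^ 2))
  (Hinit : forall L, PI * sqrt 2 < L -> forall alpha,
      0 < alpha < / sqrt 2 -> L_alpha alpha = L ->
      x L 0 > y L 0 /\ y L 0 > 0 /\
      x L 0 ^ 2 + y L 0 ^ 2 = 1 /\ x L 0 * y L 0 = alpha ^ 2 /\
      z L 0 = 0) :
  (Rbar_locally p_infty (fun L => ex_derive (fun L' => y L' 0) L)) /\
  is_lim (fun L => Derive (fun L' => y L' 0) L / y L 0) p_infty (- 1 / 2).
Proof.
  set (M0 := Rmax (PI * sqrt 2) (Fm (1/20))).
  assert (HM1 : PI * sqrt 2 <= M0) by apply Rmax_l.
  assert (HM2 : Fm (1/20) <= M0) by apply Rmax_r.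
  assert (Hy : forall L, M0 < L -> y L 0 = gy (ainv L)).
  { intros L HL. destruct (ainv_spec L ltac:(lra)) as [A B].
    pose proof sqrt2_bound.
    destruct (Hinit L ltac:(lra) (ainv L) ltac:(lra)) as [H1 [H2 [H3 [H4 _]]]].
    rewrite L_alpha_Fm by lra. auto.
    apply (y0_eq (x L 0)); auto. lra. }
  assert (Hd : forall L, M0 < L -> is_derive (fun L' => y L' 0) L (dgy (ainv L) / dF (ainv L))).
  { intros L HL. destruct (ainv_spec L ltac:(lra)) as [A B].
    apply (is_derive_ext_loc (fun t => gy (ainv t))).
    { assert (Hp : 0 < L - M0) by lra. exists (mkposreal _ Hp). intros t Ht.
      unfold ball in Ht; simpl in Ht; unfold AbsRing_ball, abs, minus, plus, opp in Ht; simpl in Ht.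
      apply Rabs_lt_between in Ht. symmetry. apply Hy. lra. }
    assert (Hinv : is_derive ainv L (1 / dF (ainv L))).
    { apply (inv_deriv Fm dF ainv ((M0 + L)/2) (L + 1) L).
      - lra.
      - intros v Hv. apply Fm_der. destruct (ainv_spec (L+1) ltac:(lra)). lra.
      - intros L' HL'. apply ainv_spec. lra.
      - intros. apply ainv_decr; lra.
      - apply ainv_cont. lra.
      - apply Rlt_not_eq. apply dF_neg. lra. }
    pose proof (is_derive_comp gy ainv L _ _ (gy_derive (ainv L) ltac:(lra)) Hinv) as HC.
    replace (dgy (ainv L) / dF (ainv L)) with (scal (1 / dF (ainv L)) (dgy (ainv L))).
    exact HC. unfold scal; simpl; unfold mult; simpl. field.
    apply Rlt_not_eq. apply dF_neg. lra. }
  split.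
  - exists M0. intros L HL. eexists. apply Hd. auto.
  - apply is_lim_spec. intros eps. simpl.
    set (d := Rmin (1/20) (eps/16)).
    assert (Hd0 : 0 < d) by (apply Rmin_pos; [lra| destruct eps; simpl; lra]).
    assert (Hd1 : d <= 1/20) by apply Rmin_l.
    assert (Hd2 : d <= eps/16) by apply Rmin_r.
    exists (Rmax M0 (Fm d)). intros L HL.
    pose proof (Rmax_l M0 (Fm d)). pose proof (Rmax_r M0 (Fm d)).
    replace (Derive (fun L' => y L' 0) L) with (dgy (ainv L) / dF (ainv L)) by (symmetry; apply is_derive_unique; apply Hd; lra). rewrite Hy by lra.
    pose proof (ainv_small L d ltac:(lra) ltac:(lra) ltac:(lra)).
    destruct (ainv_spec L ltac:(lra)) as [A B].
    pose proof (Q_bound (ainv L) ltac:(lra)).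
    replace (dgy (ainv L) / dF (ainv L) / gy (ainv L) - -1 / 2)
      with (dgy (ainv L) / dF (ainv L) / gy (ainv L) + 1 / 2) by lra.
    destruct eps; simpl in *. lra.
Qed.
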